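(* Let $A$ be a countable set, $\phi:\mathcal{X}_-\to\mathbb{R}$ a potential, and $(M_n)_{n\ge1}$ a strictly increasing sequence of natural numbers with $M_1=1$. Let $x,y\in\mathcal{X}_-$ and let $\mu,\nu\in\mathcal{P}(\phi)$ with $\mu[\eta_{-\infty}^0\in\cdot\,]=\delta_x$ and $\nu[\eta_{-\infty}^0\in\cdot\,]=\delta_y$. Then for all $n\ge1$, $0\le k\le n-1$ and all $a,b,c\in\mathcal{X}$, letting $w^{(b)}$ (resp. $w^{(c)}$) be the word $(w_1,\dots,w_{M_n-1})$ with $w_j=a_j$ for $M_{n-k}\le j\le M_n-1$ and $w_j=b_j$ (resp. $w_j=c_j$) for $1\le j<M_{n-k}$, \[ D_{\mathrm{KL}}\Big(\mu\big[\eta_{M_n}^{M_{n+1}-1}\in\cdot\mid \eta_1^{M_n-1}=w^{(b)}\big]\,\Big\|\,\nu\big[\eta_{M_n}^{M_{n+1}-1}\in\cdot\mid\eta_1^{M_n-1}=w^{(c)}\big]\Big)\le \sum_{j=M_n}^{M_{n+1}-1}\chi^2_{j-M_{n-k}}(\phi). \]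
   Context: $\mathcal{X}=A^{\mathbb{Z}}$, $\mathcal{X}_-=A^{\{0,-1,-2,\dots\}}$. For $a\in A$, $x\in\mathcal{X}_-$, $ax\in\mathcal{X}_-$ is the sequence $w$ with $w_0=a$, $w_{-m-1}=x_{-m}$ ($m\ge0$); for $b\in A$, $z\in\mathcal{X}$, $k\ge0$, $x\in\mathcal{X}_-$, $bz_{-k}^{-1}x$ is the sequence $w\in\mathcal{X}_-$ with $w_0=b$, $w_{-j}=z_{-j}$ ($1\le j\le k$), $w_{-k-1-m}=x_{-m}$ ($m\ge0$) (for $k=0$ this is $bx$). A potential is a measurable $\phi:\mathcal{X}_-\to\mathbb{R}$ with $\sum_{a\in A}e^{\phi(ax)}=1$ for all $x$. For $k\ge0$, $\chi^2_k(\phi)=\sup_{z\in\mathcal{X}}\sup_{x,y\in\mathcal{X}_-}\sum_{b\in A}\big(e^{\phi(bz_{-k}^{-1}x)}-e^{\phi(bz_{-k}^{-1}y)}\big)^2/e^{\phi(bz_{-k}^{-1}y)}$ (possibly $+\infty$). $\eta_n(x)=x_n$ on $\mathcal{X}$; $\eta_{-\infty}^n\in\mathcal{X}_-$ has coordinate $\eta_{n-m}$ at $-m$; $\eta_i^j=(\eta_i,\dots,\eta_j)$. A probability $\mu$ on $\mathcal{X}$ is compatible with $\phi$ if for all $n\ge0$, $a\in A$: $\mu[\eta_{n+1}=a\mid\eta_{-\infty}^n]=e^{\phi(a\,\eta_{-\infty}^n)}$ $\mu$-a.s.; $\mathcal{P}(\phi)$ is the set of such measures. For $\mu$ with $\mu[\eta_{-\infty}^0\in\cdot]=\delta_x$,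 the conditional law of the block $\eta_{m}^{m'}$ given $\eta_1^{m-1}=(w_1,\dots,w_{m-1})$ is the probability on $A^{m'-m+1}$ giving $(u_m,\dots,u_{m'})$ mass $\prod_{i=m}^{m'}e^{\phi(v^{(i)})}$, where $v^{(i)}\in\mathcal{X}_-$ has coordinates $u_i,u_{i-1},\dots,u_m,w_{m-1},\dots,w_1,x_0,x_{-1},\dots$ at positions $0,-1,-2,\dots$. $D_{\mathrm{KL}}(P\|Q)=\sum_yP(y)\ln(P(y)/Q(y))$. *)

(* Defs.v *)
From HB Require Import structures.
From mathcomp Require Import all_boot all_order all_algebra.
From mathcomp Require Import all_classical all_reals all_analysis.
Set Implicit Arguments. Unset Strict Implicit. Unset Printing Implicit Defensive.
Import Order.TTheory GRing.Theory Num.Theory.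
Local Open Scope ring_scope.
Local Open Scope classical_set_scope.

Definition Xfull (A : Type) := int -> A.
(* X_- = A^{0,-1,-2,...}: x m is the coordinate at position -m *)
Definition Xpast (A : Type) := nat -> A.

(* a x : w_0 = a, w_{-m-1} = x_{-m} *)
Definition pcons (A : Type) (a : A) (x : Xpast A) : Xpast A :=
  fun m => if m is m'.+1 then x m' else a.

(* b z_{-k}^{-1} x : w_0 = b, w_{-j} = z_{-j} (1<=j<=k), w_{-k-1-m} = x_{-m} *)
Definition pblock (A : Type) (b : A) (z : Xfull A) (k : nat) (x : Xpast A)
  : Xpast A :=
  fun m => if m == 0%N then b
           else if (m <= k)%N then z (- (m%:Z))
           else x (m - k.+1)%N.

(* cylinder sets of X_- (product sigma-algebra generators, A discrete) *)
Definition cylinders (A : Type) : set (set (Xpast A)) :=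
  [set C | exists (n : nat) (w : nat -> A),
      C = [set x | forall i, (i < n)%N -> x i = w i]].

Definition past_measurable (R : realType) (A : Type) (phi : Xpast A -> R) :=
  forall B : set R, measurable B -> <<s @cylinders A >> (phi @^-1` B).

Definition potential (R : realType) (A : countType) (phi : Xpast A -> R) :=
  past_measurable phi /\
  forall x : Xpast A,
    (\esum_(a in [set: A]) (expR (phi (pcons a x)))%:E = 1)%E.

Definition chi2 (R : realType) (A : countType) (k : nat) (phi : Xpast A -> R)
  : \bar R :=
  ereal_sup [set s | exists (z : Xfull A) (x y : Xpast A),
    s = (\esum_(b in [set: A])
          (((expR (phi (pblock b z k x)) - expR (phi (pblock b z k y))) ^+ 2
            / expR (phi (pblock b z k y)))%:E))%E].

(* v^{(i)}: coordinates s_i, s_{i-1}, ..., s_1, x_0, x_{-1}, ... *)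
Definition hist (A : Type) (x : Xpast A) (s : nat -> A) (i : nat) : Xpast A :=
  fun t => if (t < i)%N then s (i - t)%N else x (t - i)%N.

Definition glue (A : Type) (w : nat -> A) (m L : nat) (u : {ffun 'I_L -> A})
  : nat -> A :=
  fun j => if (j < m)%N then w j else
    match @insub _ (fun i => (i < L)%N) 'I_L (j - m)%N with
    | Some i => u i
    | None => w j
    end.

(* conditional law of eta_m^{m+L-1} given eta_1^{m-1} = w, when the past
   eta_{-oo}^0 is x (as defined in the context) *)
Definition cond_law (R : realType) (A : Type) (phi : Xpast A -> R)
  (x : Xpast A) (w : nat -> A) (m L : nat) (u : {ffun 'I_L -> A}) : R :=
  \prod_(i < L) expR (phi (hist x (glue w m u) (m + i)%N)).
Arguments cond_law {R A} phi x w m L u.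

(* D_KL(P||Q) = sum_y P(y) ln (P(y)/Q(y)) over a countable set, in \bar R
   (conventions 0 ln(0/q) = 0, p ln(p/0) = +oo for p > 0); the countable sum
   is the sum of the positive parts minus the sum of the negative parts *)
Definition KL (R : realType) (T : choiceType) (P Q : T -> R) : \bar R :=
  let f := fun t => if P t == 0 then 0%E
                    else if Q t == 0 then +oo%E
                    else (P t * ln (P t / Q t))%:E in
  (\esum_(t in [set: T]) maxe (f t) 0%E
   - \esum_(t in [set: T]) maxe (- f t)%E 0%E)%E.

(* Main.v *)
Require Import Defs.
From HB Require Import structures.
From mathcomp Require Import all_boot all_order all_algebra.
From mathcomp Require Import all_classical all_reals all_analysis.
From mathcomp Require Import zify.
From mathcomp.algebra_tactics Require Import ring lra.
Import Order.TTheory GRing.Theory Num.Theory.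
Set Implicit Arguments. Unset Strict Implicit. Unset Printing Implicit Defensive.
Local Open Scope ring_scope.
Local Open Scope classical_set_scope.

Section Gen.
Variables (R : realType) (A : countType) (d : A).

Definition ext (d0 : A) (L : nat) (u : {ffun 'I_L -> A}) : nat -> A :=
  fun j => match @insub _ (fun j => (j < L)%N) 'I_L j with
           | Some i => u i | None => d0 end.

Lemma ext_lt d0 L (u : {ffun 'I_L -> A}) j (h : (j < L)%N) : ext d0 u j = u (Ordinal h).
Proof. by rewrite /ext insubT. Qed.

Lemma ext_ge d0 L (u : {ffun 'I_L -> A}) j : ~~ (j < L)%N -> ext d0 u j = d0.
Proof. by move=> h; rewrite /ext insubF //; apply/negbTE. Qed.

Local Open Scope ereal_scope.

Definition W (L : nat) (F : (nat -> A) -> \bar R) :=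
  \esum_(u in [set: {ffun 'I_L -> A}]) F (ext d u).

Definition upd (s : nat -> A) (i : nat) (b : A) : nat -> A :=
  fun j => if j == i then b else s j.

Lemma W_fubini L (F : (nat -> A) -> \bar R) : (forall s, 0 <= F s) ->
  W L.+1 F = W L (fun s => \esum_(b in [set: A]) F (upd s L b)).
Proof.
move=> F0; rewrite /W esum_esum; last by [].
pose e := fun v : {ffun 'I_L.+1 -> A} =>
  ([ffun i : 'I_L => v (widen_ord (leqnSn L) i)], v ord_max).
rewrite (@reindex_esum _ _ _ [set: {ffun 'I_L.+1 -> A}] _ e).
  apply: eq_esum => v _; congr F; apply: funext => j; rewrite /upd /e /=.
  have [->|jL] := eqVneq j L.
    by rewrite (ext_lt _ _ (ltnSn L)); congr (v _); apply: val_inj.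
  have [jlt|jge] := boolP (j < L)%N.
    have jlt' : (j < L.+1)%N by rewrite ltnS ltnW.
    rewrite (ext_lt _ _ jlt') (ext_lt _ _ jlt) ffunE.
    by congr (v _); apply: val_inj.
  rewrite !ext_ge //; rewrite ltnS leq_eqVlt negb_or jL //.
rewrite (_ : [set: {ffun 'I_L -> A}] `*`` (fun _ => [set: A]) = setT); last first.
  by apply/seteqP; split.
rewrite setTT_bijective.
exists (fun ub : {ffun 'I_L -> A} * A => [ffun i : 'I_L.+1 => ext ub.2 ub.1 i]).
  move=> v; apply/ffunP => i; rewrite ffunE /e /=.
  have [ilt|ige] := boolP (i < L)%N.
    by rewrite (ext_lt _ _ ilt) ffunE; congr (v _); apply: val_inj.
  rewrite ext_ge //; congr (v _); apply: val_inj => /=.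
  by apply/eqP; rewrite eqn_leq (leqNgt L i) ige /= -ltnS ltn_ord.
move=> [u b]; rewrite /e /=; congr (_, _).
  apply/ffunP => i; rewrite !ffunE /= (ext_lt _ _ (ltn_ord i)).
  by congr (u _); apply: val_inj.
by rewrite ffunE ext_ge //= ltnn.
Qed.

Lemma esumZl (T : choiceType) (S : set T) (c : R) (f : T -> \bar R) :
  (0 <= c)%R -> (forall t, 0 <= f t) ->
  \esum_(t in S) (c%:E * f t) = c%:E * \esum_(t in S) f t.
Proof.
move=> c0 f0; rewrite /esum -ereal_supZl //; last first.
  by apply/set0P; exists (\sum_(x \in set0) f x); exists set0 => //; exact: fsets_set0.
congr ereal_sup; apply/seteqP; split => z /=.
  by move=> [X XS <-]; exists (\sum_(x \in X) f x); [exists X|rewrite ge0_mule_fsumr].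
by move=> [_ [X XS <-] <-]; exists X => //; rewrite ge0_mule_fsumr.
Qed.

Definition dep (n : nat) (F : (nat -> A) -> R) :=
  forall s s', (forall j, (j < n)%N -> s j = s' j) -> F s = F s'.

Lemma dep_mono n n' F : (n <= n')%N -> dep n F -> dep n' F.
Proof. by move=> nn' h s s' e; apply: h => j jn; apply: e; exact: leq_trans jn nn'. Qed.

Lemma dep_upd n F s b : dep n F -> F (upd s n b) = F s.
Proof. by move=> h; apply: h => j jn; rewrite /upd (ltn_eqF jn). Qed.

Lemma W_ext L F G : (forall s, F s = G s) -> W L F = W L G.
Proof. by move=> e; rewrite /W; apply: eq_esum => u _; rewrite e. Qed.

Lemma W0 (G : (nat -> A) -> \bar R) : 0 <= G (ext d [ffun i : 'I_0 => d]) ->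
  W 0 G = G (ext d [ffun i : 'I_0 => d]).
Proof.
move=> G0; rewrite /W (_ : [set: {ffun 'I_0 -> A}] = [set [ffun i : 'I_0 => d]]).
  by rewrite esum_set1.
apply/seteqP; split => u //= _; apply/ffunP => -[i ?] //.
Qed.

Variable kern : nat -> (nat -> A) -> R.
Hypothesis kern0 : forall j s, (0 <= kern j s)%R.
Hypothesis kdep : forall j, dep j.+1 (kern j).
Hypothesis knorm : forall j s, \esum_(b in [set: A]) (kern j (upd s j b))%:E = 1.

Lemma dep_prod n i i' : (i' <= n)%N -> dep n (fun s => (\prod_(i <= j < i') kern j s)%R).
Proof.
move=> i'n s s' e; rewrite big_seq_cond [RHS]big_seq_cond; apply: eq_bigr => j.
rewrite mem_index_iota andbT => /andP[_ ji].
apply: kdep => t tj; apply: e.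
by apply: leq_trans tj _; apply: leq_trans ji i'n.
Qed.

Lemma peel L N F : (N <= L)%N -> (forall s, 0 <= F s)%R -> dep N F ->
  W L (fun s => (F s * \prod_(N <= j < L) kern j s)%R%:E) = W N (fun s => (F s)%:E).
Proof.
elim: L => [|L IH] NL F0 Fd.
  by move: NL; rewrite leqn0 => /eqP ->; apply: W_ext => s; rewrite big_geq ?mulr1.
have [->|NL'] := eqVneq N L.+1.
  by apply: W_ext => s; rewrite big_geq ?mulr1.
have NL2 : (N <= L)%N by rewrite -ltnS ltn_neqAle NL' NL.
rewrite W_fubini; last by move=> s; rewrite lee_fin mulr_ge0 // prodr_ge0.
rewrite -IH //; apply: W_ext => s.
under eq_esum => b _.
  rewrite big_nat_recr //= (dep_upd _ _ (dep_mono NL2 Fd)).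
  rewrite (dep_upd _ _ (dep_prod N (leqnn L))) mulrA EFinM.
over.
rewrite esumZl ?knorm ?mule1 // ?mulr_ge0 ?prodr_ge0 // => b; exact: kern0.
Qed.

Lemma total L : W L (fun s => (\prod_(0 <= j < L) kern j s)%R%:E) = 1.
Proof.
rewrite (W_ext _ (G := fun s => (1 * \prod_(0 <= j < L) kern j s)%R%:E)); last first.
  by move=> s; rewrite mul1r.
by rewrite peel // W0.
Qed.

Lemma factor L i (h : (nat -> A) -> R) : (i < L)%N -> (forall s, 0 <= h s)%R ->
  dep i.+1 h ->
  W L (fun s => (\prod_(0 <= j < i) kern j s * h s * \prod_(i.+1 <= j < L) kern j s)%R%:E)
  = W i (fun s => (\prod_(0 <= j < i) kern j s)%R%:E *
                  \esum_(b in [set: A]) (h (upd s i b))%:E).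
Proof.
move=> iL h0 hd.
rewrite (peel (F := fun s => (\prod_(0 <= j < i) kern j s * h s)%R)) //; last 2 first.
- by move=> s; rewrite mulr_ge0 // prodr_ge0.
- move=> s s' e /=; congr (_ * _)%R; first exact: (dep_prod 0 (leqnSn i)).
  exact: hd.
rewrite W_fubini; last by move=> s; rewrite lee_fin mulr_ge0 // prodr_ge0.
apply: W_ext => s; rewrite -esumZl ?prodr_ge0 //.
apply: eq_esum => b _; rewrite (dep_upd _ _ (dep_prod 0 (leqnn i))) EFinM //.
by move=> b; rewrite lee_fin.
Qed.

End Gen.

Section Spec.
Variables (R : realType) (A : countType) (phi : Xpast A -> R) (m : nat).

Definition Gw (w : nat -> A) (s : nat -> A) : nat -> A :=
  fun i => if (i < m)%N then w i else s (i - m)%N.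
Definition HG (x0 : Xpast A) w s j := hist x0 (Gw w s) (m + j).

Lemma HG_dep x0 w j : dep j.+1 (fun s => expR (phi (HG x0 w s j))).
Proof.
move=> s s' e; congr (expR (phi _)); apply: funext => t; rewrite /HG /hist /Gw.
case: ifPn => // tlt; case: ifPn => // im; apply: e; lia.
Qed.

Lemma HG_upd (hm : (0 < m)%N) x0 w s j b :
  HG x0 w (upd s j b) j = pcons b (fun t => HG x0 w s j t.+1).
Proof.
apply: funext => -[|t]; rewrite /HG /hist /Gw /pcons /upd.
  have -> : (0 < m + j)%N by lia.
  have -> : ((m + j - 0)%N < m)%N = false by lia.
  by have -> : ((m + j - 0 - m)%N == j) by lia.
case: ifPn => // tlt; case: ifPn => // im.
by have -> : ((m + j - t.+1 - m)%N == j) = false by lia.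
Qed.

Lemma cond_HG d0 x0 w L u :
  cond_law phi x0 w m L u = \prod_(0 <= j < L) expR (phi (HG x0 w (ext d0 u) j)).
Proof.
rewrite /cond_law big_mkord; apply: eq_bigr => i _; congr (expR (phi _)).
apply: funext => t; rewrite /HG /hist /Defs.glue /Gw; case: ifPn => // tlt.
case: ifPn => // im.
have h : ((m + i - t - m)%N < L)%N by have := ltn_ord i; lia.
case: (@insubP _ (fun j => (j < L)%N) _ (m + i - t - m)%N) => [v _ vE|]; last by rewrite h.
by rewrite (ext_lt _ _ h); congr (u _); apply: val_inj; rewrite /= vE.
Qed.

End Spec.
Lemma KL_pos (R : realType) (T : choiceType) (P Q : T -> R) :
  (forall t, 0 < P t)%R -> (forall t, 0 < Q t)%R ->
  KL P Q = (\esum_(t in [set: T]) (Num.max (P t * ln (P t / Q t)) 0)%:E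
          - \esum_(t in [set: T]) (Num.max (- (P t * ln (P t / Q t))) 0)%:E)%E.
Proof.
move=> P0 Q0; rewrite /KL; congr (_ - _)%E; apply: eq_esum => t _;
  rewrite (gt_eqF (P0 t)) (gt_eqF (Q0 t)) ?EFinN EFin_max //.
Qed.

Lemma Mmono (M : nat -> nat) : (forall n, (1 <= n)%N -> (M n < M n.+1)%N) ->
  forall p q, (1 <= p)%N -> (p <= q)%N -> (M p <= M q)%N.
Proof.
move=> hM p q p1; elim: q => [|q IH]; first by move=> h; lia.
move=> pq; have [->//|ne] := eqVneq p q.+1.
have pq' : (p <= q)%N by lia.
by apply: leq_trans (IH pq') (ltnW (hM q _)); lia.
Qed.

Local Close Scope classical_set_scope.
Unset Implicit Arguments.
Theorem lemma1 (R : realType) (A : countType) (phi : Xpast A -> R)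
  (M : nat -> nat)
  (hphi : potential phi)
  (hM : forall n, (1 <= n)%N -> (M n < M n.+1)%N)
  (hM1 : M 1%N = 1%N)
  (x y : Xpast A) (n k : nat) (a b c : Xfull A) :
  (1 <= n)%N -> (k <= n.-1)%N ->
  let wb := fun j : nat => if (M (n - k) <= j)%N then a j%:Z else b j%:Z in
  let wc := fun j : nat => if (M (n - k) <= j)%N then a j%:Z else c j%:Z in
  let L := (M n.+1 - M n)%N in
  (KL (cond_law phi x wb (M n) L) (cond_law phi y wc (M n) L)
   <= \sum_(M n <= j < M n.+1) chi2 (A := A) (j - M (n - k))%N phi)%E.
Proof.
move=> n1 kn; cbv zeta.
set wb := fun j : nat => if (M (n - k) <= j)%N then a j%:Z else b j%:Z.
set wc := fun j : nat => if (M (n - k) <= j)%N then a j%:Z else c j%:Z.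
set L := (M n.+1 - M n)%N.
have m1 : (1 <= M n)%N by rewrite -hM1; apply: Mmono.
have Mk1 : (1 <= M (n - k))%N by rewrite -hM1; apply: Mmono => //; lia.
have Mkm : (M (n - k) <= M n)%N by apply: Mmono => //; lia.
set m := M n in m1 Mkm wb wc L *.
set d := a 0.
pose p j s := expR (phi (HG m x wb s j)).
pose q j s := expR (phi (HG m y wc s j)).
have condP : cond_law phi x wb m L = fun u => \prod_(0 <= j < L) p j (ext d u).
  by apply: funext => u; rewrite (cond_HG _ _ d).
have condQ : cond_law phi y wc m L = fun u => \prod_(0 <= j < L) q j (ext d u).
  by apply: funext => u; rewrite (cond_HG _ _ d).
have p0 j s : (0 <= p j s)%R by apply/ltW/expR_gt0.
have q0 j s : (0 <= q j s)%R by apply/ltW/expR_gt0.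
have pdep j : dep j.+1 (p j) by exact: HG_dep.
have qdep j : dep j.+1 (q j) by exact: HG_dep.
have pnorm j s : (\esum_(b in [set: A]) (p j (upd s j b))%:E = 1)%E.
  by rewrite /p; under eq_esum do rewrite HG_upd //; apply: hphi.2.
have qnorm j s : (\esum_(b in [set: A]) (q j (upd s j b))%:E = 1)%E.
  by rewrite /q; under eq_esum do rewrite HG_upd //; apply: hphi.2.
rewrite condP condQ KL_pos; last 2 first.
- by move=> u; apply: prodr_gt0 => j _; apply: expR_gt0.
- by move=> u; apply: prodr_gt0 => j _; apply: expR_gt0.
pose P s := \prod_(0 <= j < L) p j s.
pose Q s := \prod_(0 <= j < L) q j s.
pose g s := (P s * ln (P s / Q s))%R.
pose Pl (i : nat) s := \prod_(0 <= j < i) p j s.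
pose Pr (i : nat) s := \prod_(i.+1 <= j < L) p j s.
pose Y (i : nat) s := (\prod_(0 <= j < i) p j s * q i s * \prod_(i.+1 <= j < L) p j s)%R.
pose h (i : nat) s := ((p i s - q i s) ^+ 2 / q i s)%R.
pose Dd (i : nat) s := (\prod_(0 <= j < i) p j s * h i s * \prod_(i.+1 <= j < L) p j s)%R.
change ((W d L (fun s => (Num.max (g s) 0)%:E) - W d L (fun s => (Num.max (- g s) 0)%:E) <=
   (\sum_(m <= j < M n.+1) chi2 (j - M (n - k)%N) phi)%R)%E).
have pw s : (Num.max (g s) 0 + \sum_(i < L) Y i s <=
             \sum_(i < L) (Dd i s + P s) + Num.max (- g s) 0)%R.
  pose av i := phi (HG m x wb s i).
  pose bv i := phi (HG m y wc s i).
  have lnE : ln (P s / Q s) = \sum_(0 <= i < L) (av i - bv i).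
    by rewrite /P /Q /p /q -!expR_sum -expRB expRK sumrB.
  have gE : g s = \sum_(i < L) (P s * (av i - bv i)).
    by rewrite /g lnE mulr_sumr big_mkord.
  have each (i : 'I_L) : (P s * (av i - bv i) <= Dd i s + P s - Y i s)%R.
    have Psplit : P s = (Pl i s * p i s * Pr i s)%R.
      rewrite /P (big_cat_nat (leq0n i) (ltnW (ltn_ord i))) /=.
      by rewrite (big_ltn (ltn_ord i)) mulrA.
    have qpos : (0 < q i s)%R by apply: expR_gt0.
    have ab : (av i - bv i <= p i s / q i s - 1)%R.
      by rewrite -expRB lerBrDl; apply: expR_ge1Dx.
    have r0 : (0 <= Pl i s * p i s * Pr i s)%R.
      by rewrite !mulr_ge0 // prodr_ge0.
    rewrite Psplit /Dd /Y /h -/(Pl i s) -/(Pr i s).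
    have -> : (Pl i s * ((p i s - q i s) ^+ 2 / q i s) * Pr i s + Pl i s * p i s * Pr i s -
       Pl i s * q i s * Pr i s = Pl i s * p i s * Pr i s * (p i s / q i s - 1))%R.
      by field; rewrite gt_eqF.
    by apply: ler_wpM2l.
  have key : (g s + \sum_(i < L) Y i s <= \sum_(i < L) (Dd i s + P s))%R.
    rewrite -lerBrDr -sumrB gE; apply: ler_sum => i _; exact: each.
  have [g0|g0] := leP 0%R (g s).
    rewrite (@max_r _ _ (- g s) 0) ?oppr_le0 //; move: key; lra.
  rewrite (@max_l _ _ (- g s) 0); last by rewrite oppr_ge0 ltW.
  move: key; lra.
have WY (i : 'I_L) : W d L (fun s => (Y i s)%:E) = 1%E.
  etransitivity; first exact: (factor d p0 pdep pnorm (ltn_ord i) (q0 i) (qdep i)).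
  under W_ext do rewrite qnorm mule1.
  exact (total d p0 pdep pnorm i).
have WP : W d L (fun s => (P s)%:E) = 1%E by exact (total d p0 pdep pnorm L).
have h0 i s : (0 <= h i s)%R by rewrite /h divr_ge0 ?sqr_ge0.
have hdep i : dep i.+1 (h i).
  move=> s s' e; rewrite /h.
  by rewrite (pdep i s s' e) (qdep i s s' e).
have WD (i : 'I_L) : (W d L (fun s => (Dd i s)%:E) <= chi2 (A := A) (i + m - M (n - k))%N phi)%E.
  have -> : W d L (fun s => (Dd i s)%:E) = _ :=
    factor d p0 pdep pnorm (ltn_ord i) (h0 i) (hdep i).
  set K := (i + m - M (n - k))%N.
  have hb s : (\esum_(b in [set: A]) (h i (upd s i b))%:E <= chi2 (A := A) K phi)%E.
    apply: ereal_sup_ubound.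
    exists (fun z : int => HG m x wb s i `|z|%N), (fun t => HG m x wb s i (t + K.+1)%N),
      (fun t => HG m y wc s i (t + K.+1)%N).
    apply: eq_esum => bb _.
    have E1 : HG m x wb (upd s i bb) i = Defs.pblock bb (fun z : int => HG m x wb s i `|z|%N) K
                (fun t => HG m x wb s i (t + K.+1)%N).
      apply: funext => t; rewrite HG_upd // /Defs.pblock /pcons; case: t => [|t] //=.
      case: ifPn => tK; first by [].
      by have -> : (t.+1 - K.+1 + K.+1 = t.+1)%N by lia.
    have E2 : HG m y wc (upd s i bb) i = Defs.pblock bb (fun z : int => HG m x wb s i `|z|%N) K
                (fun t => HG m y wc s i (t + K.+1)%N).
      apply: funext => t; rewrite HG_upd // /Defs.pblock /pcons; case: t => [|t] //=.
      case: ifPn => tK; last by have -> : (t.+1 - K.+1 + K.+1 = t.+1)%N by lia.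
      rewrite ?abszN ?absz_nat /HG /hist /Gw.
      have -> : (t.+1 < m + i)%N by rewrite /K in tK; lia.
      case: ifPn => //= _; rewrite /wb /wc.
      by have -> : (M (n - k) <= m + i - t.+1)%N by rewrite /K in tK; lia.
    by rewrite /h /p /q E1 E2.
  have C0 : (0 <= chi2 (A := A) K phi)%E.
    apply: le_trans (hb (fun _ => d)); apply: esum_ge0 => bb _; rewrite lee_fin.
    exact: h0.
  move: (chi2 K phi) hb C0 => [C| |] hb C0; last 2 first.
  - by rewrite leey.
  - by move: C0; rewrite leeNy_eq.
  apply: (@le_trans _ _ (W d i (fun s => C%:E * (Pl i s)%:E)%E)).
    rewrite /W; apply: le_esum => u _; rewrite [X in (_ <= X)%E]muleC.
    apply: lee_wpmul2l; first by rewrite lee_fin prodr_ge0.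
    exact: hb.
  have T1 : W d i (fun s => (Pl i s)%:E) = 1%E := total d p0 pdep pnorm i.
  rewrite /W in T1; rewrite /W esumZl ?T1 ?mule1 // => u.
  by rewrite lee_fin prodr_ge0.
rewrite (_ : (\sum_(m <= j < M n.+1) chi2 (A := A) (j - M (n - k))%N phi)%R =
   \sum_(i < L) chi2 (A := A) (i + m - M (n - k))%N phi); last first.
  by rewrite -{1}(add0n m) big_addn big_mkord.
set Ep := W d L (fun s => (Num.max (g s) 0)%:E).
set En := W d L (fun s => (Num.max (- g s) 0)%:E).
have Y0 i s : (0 <= Y i s)%R by rewrite /Y !mulr_ge0 ?prodr_ge0.
have Dd0 i s : (0 <= Dd i s)%R.
  rewrite /Dd; apply: mulr_ge0; [apply: mulr_ge0; [apply: prodr_ge0 => j _; exact: p0 | exact: h0] | apply: prodr_ge0 => j _; exact: p0].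
have P0 s : (0 <= P s)%R by rewrite prodr_ge0.
have LE : (\esum_(u in [set: {ffun 'I_L -> A}])
             (Num.max (g (ext d u)) 0 + \sum_(i < L) Y i (ext d u))%:E <=
           \esum_(u in [set: {ffun 'I_L -> A}])
             (\sum_(i < L) (Dd i (ext d u) + P (ext d u)) + Num.max (- g (ext d u)) 0)%:E)%E.
  by apply: le_esum => u _; rewrite lee_fin; exact: pw.
have eL : (\esum_(u in [set: {ffun 'I_L -> A}])
             (Num.max (g (ext d u)) 0 + \sum_(i < L) Y i (ext d u))%:E =
           Ep + \sum_(i < L) 1)%E.
  under eq_esum do rewrite EFinD -sumEFin.
  rewrite esumD; last 2 first.
  - by move=> u _; rewrite lee_fin le_max lexx orbT.
  - by move=> u _; apply: sume_ge0 => i _; rewrite lee_fin.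
  rewrite esum_sum; last by move=> u i _ _; rewrite lee_fin.
  congr (_ + _)%E; apply: eq_bigr => i _; exact (WY i).
have eR : (\esum_(u in [set: {ffun 'I_L -> A}])
             (\sum_(i < L) (Dd i (ext d u) + P (ext d u)) + Num.max (- g (ext d u)) 0)%:E =
           \sum_(i < L) (W d L (fun s => (Dd i s)%:E) + 1) + En)%E.
  under eq_esum do rewrite EFinD -sumEFin.
  rewrite esumD; last 2 first.
  - by move=> u _; apply: sume_ge0 => i _; rewrite lee_fin addr_ge0.
  - by move=> u _; rewrite lee_fin le_max lexx orbT.
  rewrite esum_sum; last by move=> u i _ _; rewrite lee_fin addr_ge0.
  congr (_ + _)%E; apply: eq_bigr => i _.
  under eq_esum do rewrite EFinD.
  rewrite esumD; last 2 first.
  - by move=> u _; rewrite lee_fin.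
  - by move=> u _; rewrite lee_fin.
  congr (_ + _)%E; exact WP.
rewrite eL eR big_split /= in LE.
have S1f : (\sum_(i < L) (1 : \bar R))%E \is a fin_num by rewrite sumEFin.
rewrite addeAC leeD2rE // in LE.
have SDle : (\sum_(i < L) W d L (fun s => (Dd i s)%:E) <=
             \sum_(i < L) chi2 (A := A) (i + m - M (n - k))%N phi)%E.
  by apply: lee_sum => i _; exact: WD.
have [Enf|Enf] := boolP (En \is a fin_num).
  rewrite leeBlDr //; apply: le_trans LE _; exact: leeD2r SDle.
have En0 : (0 <= En)%E by apply: esum_ge0 => u _; rewrite lee_fin le_max lexx orbT.
move: Enf; rewrite ge0_fin_numE // -leNgt leye_eq => /eqP ->.
by rewrite addeNy leNye.
Qed.
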